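(* In the setting described in the context, define $$Z_0=\big\|\boldsymbol{\Pi}^{\le 2N}-\boldsymbol{\Pi}^{\le 3N}B\big(I+Dg^N(\overline{\mathbf{U}})l^{-1}\big)\boldsymbol{\Pi}^{\le 2N}\big\|_2,$$ $$Z_{1,1}=\Big(\tfrac{\mathscr{l}_{22}}{\mathscr{l}_{den}}\Big)_{2N}\|V_1^N\|_1+\Big(\tfrac{\mathscr{l}_{21}}{\mathscr{l}_{den}}\Big)_{2N}\|V_2^N\|_1,\qquad Z_{1,2}=\Big(\tfrac{\mathscr{l}_{12}}{\mathscr{l}_{den}}\Big)_{2N}\|V_1^N\|_1+\Big(\tfrac{\mathscr{l}_{11}}{\mathscr{l}_{den}}\Big)_{2N}\|V_2^N\|_1,$$ where $\big(\tfrac{\mathscr{l}_{ij}}{\mathscr{l}_{den}}\big)_{2N}=\sup_{n\in\mathbb{N}_0,\,n>2N}\big|\tfrac{\mathscr{l}_{ij}(\tilde n)}{\mathscr{l}_{den}(\tilde n)}\big|$, and let $Z_1=\sqrt{Z_0^2+2Z_{1,1}^2+2Z_{1,2}^2}$. Then $$\big\|I-B\big(I+Dg^N(\overline{\mathbf{U}})l^{-1}\big)\big\|_2\le Z_1.$$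
   Context: Parameters: $\nu>0$, $\nu_1,\dots,\nu_5\in\mathbb{R}$; $\mathscr{l}(\xi)=\begin{bmatrix}\mathscr{l}_{11}(\xi)&\mathscr{l}_{12}(\xi)\\ \mathscr{l}_{21}(\xi)&\mathscr{l}_{22}(\xi)\end{bmatrix}=\begin{bmatrix}-\nu|2\pi\xi|^2+\nu_1&\nu_2\\ \nu_3&-|2\pi\xi|^2-\nu_2\end{bmatrix}$ is assumed invertible for every $\xi\in\mathbb{R}$, and $\mathscr{l}_{den}(\xi)=\det\mathscr{l}(\xi)$. Periodic setting: $d\ge1$, $\Omega_0=(-d,d)$, $|\Omega_0|=2d$, $\tilde n=n/(2d)$, $\mathbb{N}_0=\{0,1,\dots\}$, $\alpha_0=1$, $\alpha_n=2$ ($n\ge1$); $\ell^p(\mathbb{N}_0)$ has norm $\|U\|_p=(\sum_n\alpha_n|u_n|^p)^{1/p}$; $\ell^2_e=\ell^2(\mathbb{N}_0)^2$ with $\|\mathbf{U}\|_2=(\|U_1\|_2^2+\|U_2\|_2^2)^{1/2}$, and $\|\cdot\|_2$ of an operator on $\ell^2_e$ is the induced operator norm. $\gamma(u)_n=\frac1{|\Omega_0|}\int_{\Omega_0}u(x)e^{-2\pi i\tilde nx}dx$ for even $u\in L^2(\mathbb{R})$, $\gamma^\dagger(U)(x)=\mathbb{1}_{\Omega_0}(x)\sum_n\alpha_nu_n\cos(2\pi\tilde nx)$; bold versions act componentwise on pairs. $U*V=\gamma(\gamma^\dagger(U)\gamma^\dagger(V))$. $\Pi^{\le M}$ keeps coefficients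 with $n\le M$ and zeroes the others, $\Pi^{>M}=I-\Pi^{\le M}$, bold versions componentwise. $l$ acts on $\ell^2_e$ by $(l\mathbf{U})_n=\mathscr{l}(\tilde n)\mathbf{u}_n$ with $\mathbf{u}_n=((U_1)_n,(U_2)_n)$. Approximate objects: $N_0,N\in\mathbb{N}$; $\overline{\mathbf{U}}\in\ell^2_e$ with $\overline{\mathbf{U}}=\boldsymbol{\Pi}^{\le N_0}\overline{\mathbf{U}}$, $\overline{\mathbf{u}}=(\overline u_1,\overline u_2)=\boldsymbol{\gamma}^\dagger(\overline{\mathbf{U}})$. $B^N$ is a bounded operator on $\ell^2_e$ with $B^N=\boldsymbol{\Pi}^{\le N}B^N\boldsymbol{\Pi}^{\le N}$ and $B=\boldsymbol{\Pi}^{>N}+B^N$. Let $v_1=2\overline u_1\overline u_2+2\nu_4\overline u_1+\nu_5\overline u_2$, $v_2=\overline u_1^2+\nu_5\overline u_1$, $V_i^N=\Pi^{\le N}\gamma(v_i)$, $\mathbb{V}_i^N:W\mapsto V_i^N*W$, and $Dg^N(\overline{\mathbf{U}})=\begin{bmatrix}\mathbb{V}_1^N&\mathbb{V}_2^N\\-\mathbb{V}_1^N&-\mathbb{V}_2^N\end{bmatrix}$. *)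

(* Defs.v *)
From HB Require Import structures.
From mathcomp Require Import all_boot all_order all_algebra.
From mathcomp Require Import all_classical all_reals all_analysis.
Set Implicit Arguments. Unset Strict Implicit. Unset Printing Implicit Defensive.
Import Order.TTheory GRing.Theory Num.Theory.
Import numFieldNormedType.Exports.
Local Open Scope classical_set_scope.
Local Open Scope ring_scope.
Local Open Scope big_scope.

Section Defs.
Variable R : realType.

(* sequences indexed by N_0, and pairs of them (elements of l^2_e) *)
Definition sq := nat -> R.
Definition sq2 := (sq * sq)%type.

Definition alpha (n : nat) : R := if n == 0%N then 1 else 2.

Definition tl (d : R) (n : nat) : R := n%:R / (2 * d).

Definition rsum (f : nat -> R) : R := limn (series f : R^nat).

Definition in_l2 (U : sq) : Prop := cvgn (series (fun n => alpha n * U n ^+ 2) : R^nat).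
Definition norm2 (U : sq) : R := Num.sqrt (rsum (fun n => alpha n * U n ^+ 2)).
Definition norm1 (U : sq) : R := rsum (fun n => alpha n * `|U n|).
Definition in_l2e (W : sq2) : Prop := in_l2 W.1 /\ in_l2 W.2.
Definition norm2e (W : sq2) : R := Num.sqrt (norm2 W.1 ^+ 2 + norm2 W.2 ^+ 2).

Definition opnorm (T : sq2 -> sq2) : R :=
  sup [set norm2e (T W) | W in [set W | in_l2e W /\ norm2e W <= 1]].

Definition PiLe (M : nat) (U : sq) : sq := fun n => if (n <= M)%N then U n else 0.
Definition PiGt (M : nat) (U : sq) : sq := fun n => if (M < n)%N then U n else 0.
Definition PiLeE (M : nat) (W : sq2) : sq2 := (PiLe M W.1, PiLe M W.2).
Definition PiGtE (M : nat) (W : sq2) : sq2 := (PiGt M W.1, PiGt M W.2).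

Definition addE (W W' : sq2) : sq2 := (fun n => W.1 n + W'.1 n, fun n => W.2 n + W'.2 n).
Definition subE (W W' : sq2) : sq2 := (fun n => W.1 n - W'.1 n, fun n => W.2 n - W'.2 n).
Definition scaleE (a : R) (W : sq2) : sq2 := (fun n => a * W.1 n, fun n => a * W.2 n).

Definition l11 (nu nu1 : R) (xi : R) : R := - nu * (2 * pi * xi) ^+ 2 + nu1.
Definition l12 (nu2 : R) (xi : R) : R := nu2.
Definition l21 (nu3 : R) (xi : R) : R := nu3.
Definition l22 (nu2 : R) (xi : R) : R := - (2 * pi * xi) ^+ 2 - nu2.
Definition lden (nu nu1 nu2 nu3 : R) (xi : R) : R :=
  l11 nu nu1 xi * l22 nu2 xi - l12 nu2 xi * l21 nu3 xi.

(* l^{-1} acting on l^2_e: (l^{-1} W)_n = l(\tilde n)^{-1} w_n (2x2 inverse) *)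
Definition linv (d nu nu1 nu2 nu3 : R) (W : sq2) : sq2 :=
  (fun n => (l22 nu2 (tl d n) * W.1 n - l12 nu2 (tl d n) * W.2 n)
              / lden nu nu1 nu2 nu3 (tl d n),
   fun n => (- l21 nu3 (tl d n) * W.1 n + l11 nu nu1 (tl d n) * W.2 n)
              / lden nu nu1 nu2 nu3 (tl d n)).

(* gamma (for even u : cosine coefficients on Omega_0 = (-d,d)) *)
Definition gamma (d : R) (u : R -> R) : sq :=
  fun n => (2 * d)^-1 *
    (\int[lebesgue_measure]_(x in `]- d, d[) (u x * cos (2 * pi * tl d n * x)))%R.

Definition gammad (d : R) (U : sq) : R -> R :=
  fun x => if (- d < x) && (x < d) then
             rsum (fun n => alpha n * U n * cos (2 * pi * tl d n * x))
           else 0.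

(* discrete convolution U * W = gamma(gamma^dagger U gamma^dagger W),
   written as the sum over k in Z of u_{|k|} w_{|n-k|} *)
Definition distn (m k : nat) : nat := ((m - k) + (k - m))%N.
Definition conv (U W : sq) : sq :=
  fun n => rsum (fun k => U k * W (distn n k))
         + rsum (fun k => U k.+1 * W (n + k.+1)%N).

Definition v1 (d nu4 nu5 : R) (Ub : sq2) : R -> R :=
  fun x => 2 * gammad d Ub.1 x * gammad d Ub.2 x
           + 2 * nu4 * gammad d Ub.1 x + nu5 * gammad d Ub.2 x.
Definition v2 (d nu5 : R) (Ub : sq2) : R -> R :=
  fun x => gammad d Ub.1 x ^+ 2 + nu5 * gammad d Ub.1 x.
Definition V1N (d nu4 nu5 : R) (N : nat) (Ub : sq2) : sq := PiLe N (gamma d (v1 d nu4 nu5 Ub)).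
Definition V2N (d nu5 : R) (N : nat) (Ub : sq2) : sq := PiLe N (gamma d (v2 d nu5 Ub)).

Definition DgN (V1 V2 : sq) (W : sq2) : sq2 :=
  (fun n => conv V1 W.1 n + conv V2 W.2 n,
   fun n => - (conv V1 W.1 n + conv V2 W.2 n)).

Definition Bop (N : nat) (BN : sq2 -> sq2) (W : sq2) : sq2 := addE (PiGtE N W) (BN W).

Definition supq (d : R) (N : nat) (f : R -> R) : R :=
  sup [set `|f (tl d n)| | n in [set n : nat | (2 * N < n)%N]].

End Defs.

(* Main.v *)
Require Import Defs.
From HB Require Import structures.
From mathcomp Require Import all_boot all_order all_algebra.
From mathcomp Require Import all_classical all_reals all_analysis.
From mathcomp Require Import ring lra zify.
Set Implicit Arguments. Unset Strict Implicit. Unset Printing Implicit Defensive.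
Import Order.TTheory GRing.Theory Num.Theory.
Import numFieldNormedType.Exports.
Local Open Scope classical_set_scope.
Local Open Scope ring_scope.


Section L2.
Variable R : realType.
Implicit Types (U V Z : sq R) (W X Y : sq2 R).

Definition ps U (M : nat) : R := \sum_(n < M) alpha R n * U n ^+ 2.
Definition ps2 W M : R := ps W.1 M + ps W.2 M.

Lemma alpha_ge1 n : 1 <= alpha R n.
Proof. rewrite /alpha; case: ifP => _ //; lra. Qed.
Lemma alpha_ge0 n : 0 <= alpha R n.
Proof. by apply: le_trans (alpha_ge1 n). Qed.

Lemma ps_ge0 U M : 0 <= ps U M.
Proof. by apply: sumr_ge0 => i _; rewrite mulr_ge0 ?alpha_ge0 ?sqr_ge0. Qed.
Lemma ps2_ge0 W M : 0 <= ps2 W M.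
Proof. by rewrite addr_ge0 ?ps_ge0. Qed.

Lemma series_ps U : series (fun n => alpha R n * U n ^+ 2) = ps U.
Proof. by apply/funext => M; rewrite /series /= big_mkord. Qed.

Lemma ps_nd U : {homo ps U : n m / (n <= m)%N >-> n <= m}.
Proof.
move=> n m nm; rewrite -series_ps /series /=.
apply: (nondecreasing_series (P := xpredT)) => // k _ _.
by rewrite mulr_ge0 ?alpha_ge0 ?sqr_ge0.
Qed.

Lemma rsum_ps U : rsum (fun n => alpha R n * U n ^+ 2) = limn (ps U).
Proof. by rewrite /rsum series_ps. Qed.

Lemma in_l2_ps U : in_l2 U <-> cvgn (ps U).
Proof. by rewrite /in_l2 series_ps. Qed.

Lemma l2_of_bound U B : (forall M, ps U M <= B) ->
  in_l2 U /\ limn (ps U) <= B.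
Proof.
move=> hB.
have hc : cvgn (ps U).
  apply: nondecreasing_is_cvgn; first exact: ps_nd.
  by exists B => _ [M _ <-].
split; first by apply/in_l2_ps.
by apply: limr_le => //; apply: nearW.
Qed.

Lemma ps_le_lim U M : in_l2 U -> ps U M <= limn (ps U).
Proof. by move/in_l2_ps => hc; apply: nondecreasing_cvgn_le => //; exact: ps_nd. Qed.

Lemma lim_ps_ge0 U : in_l2 U -> 0 <= limn (ps U).
Proof. by move=> h; apply: (le_trans _ (ps_le_lim 0 h)); rewrite /ps big_ord0. Qed.

Lemma norm2_sq U : in_l2 U -> norm2 U ^+ 2 = limn (ps U).
Proof. by move=> h; rewrite /norm2 rsum_ps sqr_sqrtr // lim_ps_ge0. Qed.

Lemma norm2_ge0 U : 0 <= norm2 U.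
Proof. exact: sqrtr_ge0. Qed.

Lemma norm2e_ge0 W : 0 <= norm2e W.
Proof. exact: sqrtr_ge0. Qed.

Lemma norm2e_sq W : in_l2e W -> norm2e W ^+ 2 = limn (ps W.1) + limn (ps W.2).
Proof.
case=> h1 h2; rewrite /norm2e sqr_sqrtr ?norm2_sq //.
by rewrite addr_ge0 // ?sqr_ge0 // lim_ps_ge0.
Qed.

Lemma l2e_of_bound W B : 0 <= B -> (forall M, ps2 W M <= B ^+ 2) ->
  in_l2e W /\ norm2e W <= B.
Proof.
move=> B0 hB.
have [h1 l1] : in_l2 W.1 /\ limn (ps W.1) <= B ^+ 2.
  apply: l2_of_bound => M; apply: le_trans (hB M).
  by rewrite /ps2 lerDl ps_ge0.
have [h2 l2] : in_l2 W.2 /\ limn (ps W.2) <= B ^+ 2.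
  apply: l2_of_bound => M; apply: le_trans (hB M).
  by rewrite /ps2 lerDr ps_ge0.
have he : in_l2e W by [].
have hcv : ps2 W @ \oo --> limn (ps W.1) + limn (ps W.2).
  move/in_l2_ps: h1 => h1'; move/in_l2_ps: h2 => h2'.
  exact: (cvgD h1' h2').
have hc2 : cvgn (ps2 W) by apply/cvgP: hcv.
have hc : limn (ps2 W) = limn (ps W.1) + limn (ps W.2) by apply: cvg_lim.
have : limn (ps2 W) <= B ^+ 2 by apply: limr_le => //; apply: nearW.
rewrite hc -norm2e_sq // => h.
by rewrite -(ler_pXn2r (n:=2)) // ?nnegrE ?norm2e_ge0.
Qed.

Lemma ps2_le W M : in_l2e W -> ps2 W M <= norm2e W ^+ 2.
Proof.
move=> h; rewrite norm2e_sq //; case: h => h1 h2.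
by rewrite /ps2 lerD // ps_le_lim.
Qed.

Lemma ps2_cvg W : in_l2e W -> ps2 W @ \oo --> norm2e W ^+ 2.
Proof.
move=> h; rewrite norm2e_sq //; case: h => /in_l2_ps h1 /in_l2_ps h2.
exact: (cvgD h1 h2).
Qed.

End L2.


Section CS.
Variable R : realType.
Implicit Types (U V Z : sq R) (W X Y : sq2 R).

Lemma abs_le_of_sq (x y : R) : 0 <= y -> x ^+ 2 <= y ^+ 2 -> `|x| <= y.
Proof.
move=> y0 h; rewrite -(ler_pXn2r (n:=2)) ?nnegrE //.
by rewrite real_normK ?num_real.
Qed.

Lemma cs_step (A B C p q x : R) : 0 <= A -> 0 <= B -> 0 <= p -> 0 <= q ->
  C ^+ 2 <= A * B -> x ^+ 2 <= p * q -> (C + x) ^+ 2 <= (A + p) * (B + q).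
Proof.
move=> A0 B0 p0 q0 hC hx.
set sA := Num.sqrt A; set sB := Num.sqrt B; set sp := Num.sqrt p; set sq := Num.sqrt q.
have eA : A = sA ^+ 2 by rewrite sqr_sqrtr.
have eB : B = sB ^+ 2 by rewrite sqr_sqrtr.
have ep : p = sp ^+ 2 by rewrite sqr_sqrtr.
have eq : q = sq ^+ 2 by rewrite sqr_sqrtr.
have sA0 : 0 <= sA by apply: sqrtr_ge0.
have sB0 : 0 <= sB by apply: sqrtr_ge0.
have sp0 : 0 <= sp by apply: sqrtr_ge0.
have sq0 : 0 <= sq by apply: sqrtr_ge0.
have hC' : `|C| <= sA * sB.
  by apply: abs_le_of_sq; rewrite ?mulr_ge0 // exprMn -eA -eB.
have hx' : `|x| <= sp * sq.
  by apply: abs_le_of_sq; rewrite ?mulr_ge0 // exprMn -ep -eq.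
have hCx : C * x <= sA * sB * (sp * sq).
  apply: le_trans (ler_norm _) _; rewrite normrM.
  by apply: ler_pM => //; apply: normr_ge0.
have amgm : 2 * (sA * sB * (sp * sq)) <= A * q + B * p.
  rewrite eA eB ep eq -subr_ge0.
  have -> : sA ^+ 2 * sq ^+ 2 + sB ^+ 2 * sp ^+ 2 - 2 * (sA * sB * (sp * sq))
     = (sA * sq - sB * sp) ^+ 2 by ring.
  exact: sqr_ge0.
rewrite -subr_ge0.
have -> : (A + p) * (B + q) - (C + x) ^+ 2
   = (A * B - C ^+ 2) + (p * q - x ^+ 2) + (A * q + B * p - 2 * (C * x)) by ring.
lra.
Qed.

Lemma cs_gen (M : nat) (x p q : nat -> R) :
  (forall i, 0 <= p i) -> (forall i, 0 <= q i) ->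
  (forall i, x i ^+ 2 <= p i * q i) ->
  (\sum_(i < M) x i) ^+ 2 <= (\sum_(i < M) p i) * (\sum_(i < M) q i).
Proof.
move=> hp hq hx; elim: M => [|M IH]; first by rewrite !big_ord0 expr0n mul0r.
rewrite !big_ord_recr /=; apply: cs_step => //.
- by apply: sumr_ge0.
- by apply: sumr_ge0.
Qed.

Lemma sqrt_le_sum (a b c : R) : 0 <= a -> 0 <= b -> 0 <= c ->
  c <= (Num.sqrt a + Num.sqrt b) ^+ 2 -> Num.sqrt c <= Num.sqrt a + Num.sqrt b.
Proof.
move=> a0 b0 c0 h.
rewrite -(ler_pXn2r (n:=2)) ?nnegrE ?addr_ge0 ?sqrtr_ge0 //.
by rewrite sqr_sqrtr.
Qed.

Lemma ps_mink U V Z M : (forall n, Z n = U n + V n) ->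
  Num.sqrt (ps Z M) <= Num.sqrt (ps U M) + Num.sqrt (ps V M).
Proof.
move=> hZ; apply: sqrt_le_sum; rewrite ?ps_ge0 //.
set C := \sum_(n < M) alpha R n * U n * V n.
have hC : C ^+ 2 <= ps U M * ps V M.
  rewrite /C /ps.
  apply: (@cs_gen M (fun i => alpha R i * U i * V i) (fun i => alpha R i * U i ^+ 2)
     (fun i => alpha R i * V i ^+ 2)) => i.
  - by rewrite mulr_ge0 ?alpha_ge0 ?sqr_ge0.
  - by rewrite mulr_ge0 ?alpha_ge0 ?sqr_ge0.
  - by rewrite le_eqVlt; apply/orP; left; apply/eqP; ring.
have eZ : ps Z M = ps U M + ps V M + 2 * C.
  rewrite /ps /C mulr_sumr -!big_split /=; apply: eq_bigr => i _.
  by rewrite hZ; ring.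
have hC' : C <= Num.sqrt (ps U M) * Num.sqrt (ps V M).
  apply: (le_trans (ler_norm C)); apply: abs_le_of_sq.
    by rewrite mulr_ge0 ?sqrtr_ge0.
  by rewrite exprMn !sqr_sqrtr ?ps_ge0.
rewrite eZ sqrrD !sqr_sqrtr ?ps_ge0 // mulr2n.
lra.
Qed.


Lemma sqrt_ps2_le W M : in_l2e W -> Num.sqrt (ps2 W M) <= norm2e W.
Proof.
move=> h; rewrite -(ger0_norm (norm2e_ge0 W)) -sqrtr_sqr.
by rewrite ler_sqrt ?sqr_ge0 // ps2_le.
Qed.

Lemma sq_le_of_sqrt (a b : R) : 0 <= a -> 0 <= b -> Num.sqrt a <= b -> a <= b ^+ 2.
Proof.
move=> a0 b0 h; rewrite -(sqr_sqrtr a0).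
by rewrite ler_pXn2r ?nnegrE ?sqrtr_ge0.
Qed.

Lemma ps2_mink W X Y M : (forall n, W.1 n = X.1 n + Y.1 n) ->
  (forall n, W.2 n = X.2 n + Y.2 n) ->
  Num.sqrt (ps2 W M) <= Num.sqrt (ps2 X M) + Num.sqrt (ps2 Y M).
Proof.
move=> h1 h2.
have m1 := ps_mink M h1; have m2 := ps_mink M h2.
apply: sqrt_le_sum; rewrite ?ps2_ge0 //.
set a1 := Num.sqrt (ps X.1 M); set a2 := Num.sqrt (ps X.2 M).
set b1 := Num.sqrt (ps Y.1 M); set b2 := Num.sqrt (ps Y.2 M).
have a10 : 0 <= a1 by apply: sqrtr_ge0.
have a20 : 0 <= a2 by apply: sqrtr_ge0.
have b10 : 0 <= b1 by apply: sqrtr_ge0.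
have b20 : 0 <= b2 by apply: sqrtr_ge0.
have e1 : ps W.1 M <= (a1 + b1) ^+ 2 by apply: sq_le_of_sqrt; rewrite ?ps_ge0 ?addr_ge0.
have e2 : ps W.2 M <= (a2 + b2) ^+ 2 by apply: sq_le_of_sqrt; rewrite ?ps_ge0 ?addr_ge0.
have eX : ps2 X M = a1 ^+ 2 + a2 ^+ 2 by rewrite /a1 /a2 !sqr_sqrtr ?ps_ge0.
have eY : ps2 Y M = b1 ^+ 2 + b2 ^+ 2 by rewrite /b1 /b2 !sqr_sqrtr ?ps_ge0.
have hc : a1 * b1 + a2 * b2 <= Num.sqrt (ps2 X M) * Num.sqrt (ps2 Y M).
  apply: (le_trans (ler_norm _)); apply: abs_le_of_sq.
    by rewrite mulr_ge0 ?sqrtr_ge0.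
  rewrite exprMn !sqr_sqrtr ?ps2_ge0 // eX eY -subr_ge0.
  have -> : (a1 ^+ 2 + a2 ^+ 2) * (b1 ^+ 2 + b2 ^+ 2) - (a1 * b1 + a2 * b2) ^+ 2
     = (a1 * b2 - a2 * b1) ^+ 2 by ring.
  exact: sqr_ge0.
rewrite sqrrD !sqr_sqrtr ?ps2_ge0 // mulr2n eX eY /ps2.
have ex1 : (a1 + b1) ^+ 2 = a1 ^+ 2 + b1 ^+ 2 + 2 * (a1 * b1) by ring.
have ex2 : (a2 + b2) ^+ 2 = a2 ^+ 2 + b2 ^+ 2 + 2 * (a2 * b2) by ring.
rewrite ex1 in e1; rewrite ex2 in e2; move: hc; rewrite eX eY; lra.
Qed.

Lemma ps_dom Z U (c : R) M : (forall n, Z n ^+ 2 <= c * U n ^+ 2) ->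
  ps Z M <= c * ps U M.
Proof.
move=> h; rewrite /ps mulr_sumr; apply: ler_sum => i _.
by rewrite [X in _ <= X]mulrCA ler_wpM2l ?alpha_ge0.
Qed.

Lemma ps2_dom W X (c : R) M :
  (forall n, W.1 n ^+ 2 + W.2 n ^+ 2 <= c * (X.1 n ^+ 2 + X.2 n ^+ 2)) ->
  ps2 W M <= c * ps2 X M.
Proof.
move=> h; rewrite /ps2 /ps -!big_split mulr_sumr; apply: ler_sum => i _ /=.
by rewrite -!mulrDr [X in _ <= X]mulrCA ler_wpM2l ?alpha_ge0.
Qed.

Lemma l2e_dom W X (c : R) : in_l2e X -> 0 <= c ->
  (forall n, W.1 n ^+ 2 + W.2 n ^+ 2 <= c * (X.1 n ^+ 2 + X.2 n ^+ 2)) ->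
  in_l2e W /\ norm2e W <= Num.sqrt c * norm2e X.
Proof.
move=> hX c0 h; apply: l2e_of_bound.
  by rewrite mulr_ge0 ?sqrtr_ge0 ?norm2e_ge0.
move=> M; rewrite exprMn sqr_sqrtr //.
apply: le_trans (ps2_dom M h) _.
by rewrite ler_wpM2l // ps2_le.
Qed.

Lemma l2e_add W X Y : in_l2e X -> in_l2e Y ->
  (forall n, W.1 n = X.1 n + Y.1 n) -> (forall n, W.2 n = X.2 n + Y.2 n) ->
  in_l2e W /\ norm2e W <= norm2e X + norm2e Y.
Proof.
move=> hX hY h1 h2; apply: l2e_of_bound.
  by rewrite addr_ge0 ?norm2e_ge0.
move=> M; apply: sq_le_of_sqrt; rewrite ?ps2_ge0 ?addr_ge0 ?norm2e_ge0 //.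
apply: le_trans (ps2_mink M h1 h2) _.
by apply: lerD; apply: sqrt_ps2_le.
Qed.

Definition negE W : sq2 R := (fun n => - W.1 n, fun n => - W.2 n).

Lemma in_l2e_neg W : in_l2e W -> in_l2e (negE W) /\ norm2e (negE W) <= norm2e W.
Proof.
move=> h; have := @l2e_dom (negE W) W 1 h ler01.
rewrite sqrtr1 mul1r; apply => n /=; rewrite !sqrrN mul1r //.
Qed.

Lemma l2e_sub W X Y : in_l2e X -> in_l2e Y ->
  (forall n, W.1 n = X.1 n - Y.1 n) -> (forall n, W.2 n = X.2 n - Y.2 n) ->
  in_l2e W /\ norm2e W <= norm2e X + norm2e Y.
Proof.
move=> hX hY h1 h2; have [hN nN] := in_l2e_neg hY.
have [hW nW] := l2e_add hX hN h1 h2; split => //.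
by apply: le_trans nW _; rewrite lerD2l.
Qed.

End CS.


Section Conv.
Variable R : realType.
Implicit Types (U V Z : sq R) (W X Y : sq2 R).

Lemma rsum_fin (f : nat -> R) K : (forall k, (K <= k)%N -> f k = 0) ->
  rsum f = \sum_(k < K) f k.
Proof.
move=> hf; rewrite /rsum; apply: cvg_lim => //; apply: cvg_near_cst.
exists K => // n /= Kn.
rewrite /series /= (big_cat_nat _ Kn) //= big_mkord.
rewrite [X in _ + X](_ : _ = 0) ?addr0 //.
rewrite big_nat_cond big1 // => i /andP[/andP[Ki _] _]; exact: hf.
Qed.

Lemma pick_sum (L a : nat) (F : nat -> R) : (a < L)%N ->
  \sum_(m < L) (((m : nat) == a)%:R * F m) = F a.
Proof.
move=> aL; rewrite (bigD1 (Ordinal aL)) //= eqxx mul1r big1 ?addr0 // => i hi.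
suff -> : ((i : nat) == a) = false by rewrite mul0r.
apply/negbTE; apply: contra hi => /eqP h; apply/eqP/val_inj => /=; exact: h.
Qed.

Lemma sum_eq_le1 (M a : nat) : \sum_(n < M) (((n : nat) == a)%:R : R) <= 1.
Proof.
case: (ltnP a M) => aM.
  rewrite -[X in _ <= X](@pick_sum M a (fun _ => 1)) //.
  by under [X in _ <= X]eq_bigr do rewrite mulr1.
rewrite big1 // => i _; suff -> : ((i : nat) == a) = false by [].
by apply/negbTE; rewrite neq_ltn (leq_trans (ltn_ord i) aM).
Qed.

Lemma distn0 n : distn n 0 = n.
Proof. by rewrite /distn subn0 sub0n addn0. Qed.

Definition n1 V N : R := `|V 0%N| + \sum_(k < N) 2 * `|V k.+1|.

Lemma n1_ge0 V N : 0 <= n1 V N.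
Proof. by rewrite addr_ge0 // sumr_ge0 // => i _; rewrite mulr_ge0. Qed.

Lemma norm1_fin V N : (forall k, (N < k)%N -> V k = 0) -> norm1 V = n1 V N.
Proof.
move=> hV; rewrite /norm1 (@rsum_fin _ N.+1).
  by rewrite big_ord_recl /n1 /alpha /= mul1r.
by move=> k Nk; rewrite hV // normr0 mulr0.
Qed.

Lemma conv_fin V U N n : (forall k, (N < k)%N -> V k = 0) ->
  Defs.conv V U n = V 0%N * U n + \sum_(k < N) V k.+1 * (U (distn n k.+1) + U (n + k.+1)%N).
Proof.
move=> hV; rewrite /Defs.conv (@rsum_fin _ N.+1); last by move=> k Nk; rewrite hV // mul0r.
rewrite (@rsum_fin _ N); last by move=> k Nk; rewrite hV // mul0r.
rewrite big_ord_recl /= distn0 -addrA; congr (_ + _).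
rewrite -big_split /=; apply: eq_bigr => i _; rewrite mulrDr; congr (_ + _).
Qed.

Lemma alpha_nat n : alpha R n = (if n == 0%N then 1%N else 2%N)%:R.
Proof. by rewrite /alpha; case: eqP. Qed.

Lemma shift_nat (K m n : nat) : (0 < K)%N ->
  ((if n == 0 then 1 else 2) * ((m == distn n K) + (m == n + K)) <=
  2 * ((n == K + m) + ((0 < m <= K) && (n == K - m)) + ((K < m) && (n == m - K))))%N.
Proof.
move=> K0.
case: (eqVneq n 0%N) => h0; case: (eqVneq m (distn n K)) => h1;
case: (eqVneq m (n + K)%N) => h2; case: (eqVneq n (K + m)%N) => h3;
case: (eqVneq n (K - m)%N) => h5; case: (eqVneq n (m - K)%N) => h7;
case: (ltnP 0 m) => h8; case: (leqP m K) => h9; rewrite /= ?muln0 ?muln1;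
rewrite /distn in h1; lia.
Qed.


Lemma sum_eqn M a : (\sum_(n < M) ((n : nat) == a) = (a < M))%N.
Proof.
elim: M => [|M IH]; first by rewrite big_ord0.
rewrite big_ord_recr /= IH.
case: (eqVneq M a) => [->|h]; first by rewrite ltnn ltnSn.
rewrite addn0; congr nat_of_bool; rewrite [RHS]ltnS [RHS]leq_eqVlt.
by rewrite eq_sym in h; rewrite (negbTE h).
Qed.

Lemma sum_andn M a (P : bool) : (\sum_(n < M) (P && ((n : nat) == a)) <= P)%N.
Proof.
under eq_bigr do rewrite -mulnb.
by rewrite -big_distrr /= sum_eqn; case: P => //=; rewrite mul1n leq_b1.
Qed.

Lemma coef_bound (K M m : nat) : (0 < K)%N ->
  (\sum_(n < M) ((if (n : nat) == 0%N then 1 else 2) *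
     ((m == distn n K) + (m == n + K)))
   <= 2 * (if m == 0%N then 1 else 2))%N.
Proof.
move=> K0.
apply: (@leq_trans (\sum_(n < M) (2 * (((n : nat) == K + m) +
   ((0 < m <= K) && ((n : nat) == K - m)) + ((K < m) && ((n : nat) == m - K)))))%N).
  by apply: leq_sum => n _; apply: shift_nat.
rewrite -big_distrr /= leq_pmul2l // !big_split /= sum_eqn.
have h1 := sum_andn M (K - m)%N (0 < m <= K)%N.
have h2 := sum_andn M (m - K)%N (K < m)%N.
have h3 := leq_b1 (K + m < M)%N.
case: m h1 h2 h3 => [|m] /=.
  lia.
case: (leqP m.+1 K) => /= h; lia.
Qed.

Lemma shift_le U K M : (0 < K)%N ->
  \sum_(n < M) alpha R n * (U (distn n K) ^+ 2 + U (n + K)%N ^+ 2)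
  <= 2 * ps U (M + K).
Proof.
move=> K0; set L := (M + K)%N.
have e : forall n : 'I_M, alpha R n * (U (distn n K) ^+ 2 + U (n + K)%N ^+ 2) =
   \sum_(m < L) (alpha R n * (((m : nat) == distn n K)%:R + ((m : nat) == (n + K)%N)%:R))
       * U m ^+ 2.
  move=> n.
  have hn := ltn_ord n.
  rewrite -(@pick_sum L (distn n K) (fun m => U m ^+ 2)); last by rewrite /L /distn; lia.
  rewrite -(@pick_sum L (n + K)%N (fun m => U m ^+ 2)); last by rewrite /L; lia.
  rewrite -big_split /= mulr_sumr; apply: eq_bigr => i _; ring.
rewrite (eq_bigr _ (fun n _ => e n)) exchange_big /= /ps mulr_sumr.
apply: ler_sum => m _; rewrite -mulr_suml mulrA ler_wpM2r ?sqr_ge0 //.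
have -> : \sum_(i < M) alpha R i * (((m : nat) == distn i K)%:R + ((m : nat) == (i + K)%N)%:R)
   = ((\sum_(n < M) ((if (n : nat) == 0%N then 1 else 2) *
     (((m : nat) == distn n K) + ((m : nat) == n + K))))%N)%:R.
  rewrite natr_sum; apply: eq_bigr => i _.
  by rewrite alpha_nat natrM natrD.
rewrite alpha_nat -natrM ler_nat; exact: coef_bound.
Qed.

End Conv.


Section Young.
Variable R : realType.
Implicit Types (U V Z : sq R) (W X Y : sq2 R).

Lemma sqr_abs (x : R) : `|x| * `|x| = x ^+ 2.
Proof. by rewrite -expr2 real_normK ?num_real. Qed.

Definition Qy V U N n : R := `|V 0%N| * U n ^+ 2 +
  \sum_(k < N) `|V k.+1| * (U (distn n k.+1) ^+ 2 + U (n + k.+1)%N ^+ 2).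

Lemma young_pt V U N n : (forall k, (N < k)%N -> V k = 0) ->
  Defs.conv V U n ^+ 2 <= n1 V N * Qy V U N n.
Proof.
move=> hV; rewrite (conv_fin _ _ hV) /n1 /Qy.
apply: cs_step.
- exact: normr_ge0.
- by rewrite mulr_ge0 ?sqr_ge0.
- by apply: sumr_ge0 => i _; rewrite mulr_ge0.
- by apply: sumr_ge0 => i _; rewrite mulr_ge0 ?addr_ge0 ?sqr_ge0.
- by rewrite mulrA sqr_abs exprMn.
apply: (@cs_gen R N (fun k => V k.+1 * (U (distn n k.+1) + U (n + k.+1)%N))
  (fun k => 2 * `|V k.+1|)
  (fun k => `|V k.+1| * (U (distn n k.+1) ^+ 2 + U (n + k.+1)%N ^+ 2)))
  => [i|i|i]; rewrite ?mulr_ge0 ?addr_ge0 ?sqr_ge0 //.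
set y := U (distn n i.+1); set z := U (n + i.+1)%N.
have -> : 2 * `|V i.+1| * (`|V i.+1| * (y ^+ 2 + z ^+ 2)) =
  (`|V i.+1| * `|V i.+1|) * (2 * (y ^+ 2 + z ^+ 2)) by ring.
rewrite sqr_abs exprMn ler_wpM2l ?sqr_ge0 //.
rewrite -subr_ge0.
have -> : 2 * (y ^+ 2 + z ^+ 2) - (y + z) ^+ 2 = (y - z) ^+ 2 by ring.
exact: sqr_ge0.
Qed.

Lemma young_ps V U N B M : (forall k, (N < k)%N -> V k = 0) -> 0 <= B ->
  (forall M', ps U M' <= B ^+ 2) -> ps (Defs.conv V U) M <= (n1 V N * B) ^+ 2.
Proof.
move=> hV B0 hB.
apply: (@le_trans _ _ (n1 V N * \sum_(n < M) alpha R n * Qy V U N n)).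
  rewrite /ps mulr_sumr; apply: ler_sum => n _.
  by rewrite [X in _ <= X]mulrCA ler_wpM2l ?alpha_ge0 // young_pt.
rewrite exprMn expr2 -mulrA ler_wpM2l ?n1_ge0 //.
have -> : \sum_(n < M) alpha R n * Qy V U N n =
   `|V 0%N| * ps U M + \sum_(k < N) `|V k.+1| *
      \sum_(n < M) alpha R n * (U (distn n k.+1) ^+ 2 + U (n + k.+1)%N ^+ 2).
  rewrite /Qy /ps.
  under eq_bigr do rewrite mulrDr mulr_sumr.
  rewrite big_split /= mulr_sumr exchange_big /=; congr (_ + _).
    by apply: eq_bigr => i _; ring.
  apply: eq_bigr => k _; rewrite mulr_sumr; apply: eq_bigr => i _; ring.
rewrite /n1 mulrDl mulr_suml; apply: lerD.
  by rewrite ler_wpM2l.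
apply: ler_sum => k _.
rewrite [X in _ <= X](_ : _ = `|V k.+1| * (2 * B ^+ 2)); last by ring.
rewrite ler_wpM2l //.
apply: (le_trans (shift_le U M (ltn0Sn k))).
by rewrite ler_wpM2l.
Qed.

End Young.


Section Ratio.
Variable R : realType.

Lemma single_le_sum (K n : nat) (f : nat -> R) : (n < K)%N ->
  (forall i, 0 <= f i) -> f n <= \sum_(i < K) f i.
Proof.
move=> hn h0; rewrite (bigD1 (Ordinal hn)) //= lerDl.
by apply: sumr_ge0 => i _.
Qed.

Lemma ratio_bound (d nu nu1 nu2 nu3 c : R) (num : R -> R) :
  0 < d -> 0 < nu -> 0 <= c -> (forall xi, lden nu nu1 nu2 nu3 xi != 0) ->
  (forall xi, `|num xi| <= c * (1 + (2 * pi * xi) ^+ 2)) ->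
  exists G, forall n : nat,
    `|num (tl d n) / lden nu nu1 nu2 nu3 (tl d n)| <= G.
Proof.
move=> d0 nu0 c0 hden hnum.
set f := fun n : nat => `|num (tl d n) / lden nu nu1 nu2 nu3 (tl d n)|.
set c1 := `|nu * nu2 - nu1|; set cc0 := `|nu1 * nu2 + nu2 * nu3|.
have c10 : 0 <= c1 by apply: normr_ge0.
have cc00 : 0 <= cc0 by apply: normr_ge0.
set X0 := 1 + 2 * (c1 + cc0) / nu.
have X01 : 1 <= X0.
  by rewrite /X0 lerDl divr_ge0 ?mulr_ge0 ?addr_ge0 // ltW.
set K := (Num.truncn (d * X0)).+1.
exists (\sum_(i < K) f i + 4 * c / nu) => n.
have fge0 : forall i, 0 <= f i by move=> i; apply: normr_ge0.
have B0 : 0 <= 4 * c / nu by rewrite divr_ge0 ?mulr_ge0 // ltW.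
case: (ltnP n K) => hn.
  apply: le_trans (single_le_sum hn fge0) _; by rewrite lerDl.
apply: le_trans (_ : f n <= 4 * c / nu) _; last first.
  by rewrite lerDr; apply: sumr_ge0.
set xi := tl d n; set X := (2 * pi * xi) ^+ 2.
have hy : X0 <= n%:R / d.
  rewrite ler_pdivlMr // mulrC.
  apply: le_trans (ltW (truncnS_gt (d * X0))) _.
  by rewrite ler_nat.
have e2 : 2 * pi * xi = pi * (n%:R / d).
  rewrite /xi /tl; field; by rewrite gt_eqF.
have hX : X0 <= X.
  rewrite /X e2; set y := n%:R / d.
  have p2 := pi_ge2 R.
  have y1 : 1 <= y by apply: le_trans hy.
  have t1 : y <= pi * y by rewrite ler_pMl; lra.
  apply: (le_trans hy); apply: (le_trans t1).
  rewrite expr2 ler_pMr; lra.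
have X1 : 1 <= X by apply: le_trans hX.
have eden : lden nu nu1 nu2 nu3 xi =
    nu * X ^+ 2 + (nu * nu2 - nu1) * X - (nu1 * nu2 + nu2 * nu3).
  by rewrite /lden /l11 /l22 /l12 /l21 /X; ring.
set Y := nu * X ^+ 2.
have eY : Y = nu * X ^+ 2 by [].
clearbody Y.
have a1 : - (c1 * X) <= (nu * nu2 - nu1) * X.
  have Xp : 0 <= X by lra.
  rewrite -mulNr ler_wpM2r //.
  by have := ler_norm (- (nu * nu2 - nu1)); rewrite normrN /c1; lra.
have a2 : nu1 * nu2 + nu2 * nu3 <= cc0 by apply: ler_norm.
have a3 : c1 * X + cc0 * X <= Y / 2.
  have ec : c1 + cc0 = nu / 2 * (2 * (c1 + cc0) / nu).
    by field; rewrite gt_eqF.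
  have : c1 + cc0 <= nu / 2 * X.
    rewrite ec ler_wpM2l ?divr_ge0 //; try lra.
    by move: hX; rewrite /X0; lra.
  move=> h; rewrite -mulrDl.
  have -> : Y / 2 = (nu / 2 * X) * X by rewrite eY; ring.
  by rewrite ler_wpM2r //; lra.
have a4 : cc0 <= cc0 * X by rewrite -[leLHS]mulr1 ler_wpM2l.
have hL : Y / 2 <= lden nu nu1 nu2 nu3 xi by rewrite eden -eY; lra.
have Y0 : 0 < Y by rewrite eY mulr_gt0 // exprn_gt0 //; lra.
have L0 : 0 < lden nu nu1 nu2 nu3 xi by apply: lt_le_trans hL; lra.
rewrite /f -/xi normf_div (gtr0_norm L0) ler_pdivrMr //.
apply: (le_trans (hnum xi)); rewrite -/X.
apply: (@le_trans _ _ (4 * c / nu * (Y / 2))); last by rewrite ler_wpM2l.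
have -> : 4 * c / nu * (Y / 2) = c * (2 * X ^+ 2) by rewrite eY; field; rewrite gt_eqF.
rewrite ler_wpM2l //.
have : X <= X ^+ 2 by rewrite expr2 ler_pMr; lra.
lra.
Qed.

End Ratio.


Section Inf.
Variable R : realType.
Implicit Types (U V Z : sq R) (W X Y : sq2 R).

Lemma l2_of_bound' U B : 0 <= B -> (forall M, ps U M <= B ^+ 2) ->
  in_l2 U /\ norm2 U <= B.
Proof.
move=> B0 h; have [hU hl] := l2_of_bound h; split => //.
rewrite /norm2 rsum_ps -(ger0_norm B0) -sqrtr_sqr ler_sqrt //.
exact: sqr_ge0.
Qed.

Lemma ps_le_norm2 U M : in_l2 U -> ps U M <= norm2 U ^+ 2.
Proof. by move=> h; rewrite norm2_sq //; apply: ps_le_lim. Qed.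

Lemma sqrt_ps_le U M : in_l2 U -> Num.sqrt (ps U M) <= norm2 U.
Proof.
move=> h; rewrite -(ger0_norm (norm2_ge0 U)) -sqrtr_sqr.
by rewrite ler_sqrt ?sqr_ge0 // ps_le_norm2.
Qed.

Lemma l2_dom Z U (c : R) : in_l2 U -> 0 <= c ->
  (forall n, Z n ^+ 2 <= c * U n ^+ 2) -> in_l2 Z /\ norm2 Z <= Num.sqrt c * norm2 U.
Proof.
move=> hU c0 h; apply: l2_of_bound'; first by rewrite mulr_ge0 ?sqrtr_ge0 ?norm2_ge0.
move=> M; rewrite exprMn sqr_sqrtr //; apply: le_trans (ps_dom M h) _.
by rewrite ler_wpM2l // ps_le_norm2.
Qed.

Lemma ps_opp U M : ps (fun n => - U n) M = ps U M.
Proof. by apply: eq_bigr => i _; rewrite sqrrN. Qed.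

Lemma l2_add Z U V : in_l2 U -> in_l2 V -> (forall n, Z n = U n + V n) ->
  in_l2 Z /\ norm2 Z <= norm2 U + norm2 V.
Proof.
move=> hU hV h; apply: l2_of_bound'; first by rewrite addr_ge0 ?norm2_ge0.
move=> M; apply: sq_le_of_sqrt; rewrite ?ps_ge0 ?addr_ge0 ?norm2_ge0 //.
apply: le_trans (ps_mink M h) _; apply: lerD; exact: sqrt_ps_le.
Qed.

Lemma l2_sub Z U V : in_l2 U -> in_l2 V -> (forall n, Z n = U n - V n) ->
  in_l2 Z /\ norm2 Z <= norm2 U + norm2 V.
Proof.
move=> hU hV h.
have [hN nN] : in_l2 (fun n => - V n) /\ norm2 (fun n => - V n) <= Num.sqrt 1 * norm2 V.
  by apply: l2_dom => // n; rewrite sqrrN mul1r.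
rewrite sqrtr1 mul1r in nN.
have [hZ nZ] := l2_add hU hN h; split => //.
by apply: le_trans nZ _; rewrite lerD2l.
Qed.

Lemma norm2e_sqE W : norm2e W ^+ 2 = norm2 W.1 ^+ 2 + norm2 W.2 ^+ 2.
Proof. by rewrite /norm2e sqr_sqrtr // addr_ge0 ?sqr_ge0. Qed.

Lemma norm2_le_e W : norm2 W.1 <= norm2e W /\ norm2 W.2 <= norm2e W.
Proof.
split; rewrite -(ler_pXn2r (n:=2)) ?nnegrE ?norm2_ge0 ?norm2e_ge0 // norm2e_sqE.
  by rewrite lerDl sqr_ge0.
by rewrite lerDr sqr_ge0.
Qed.

Definition bnd (T : sq2 R -> sq2 R) :=
  (forall X, in_l2e X -> in_l2e (T X)) /\
  exists K, 0 <= K /\ forall X, in_l2e X -> norm2e (T X) <= K * norm2e X.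

Lemma bnd_comp T S : bnd T -> bnd S -> bnd (fun X => T (S X)).
Proof.
move=> [hT [K [K0 hK]]] [hS [L [L0 hL]]]; split; first by move=> X /hS /hT.
exists (K * L); split; first exact: mulr_ge0.
move=> X hX; apply: le_trans (hK _ (hS _ hX)) _.
by rewrite -mulrA ler_wpM2l // hL.
Qed.

Lemma bnd_add T S : bnd T -> bnd S -> bnd (fun X => addE (T X) (S X)).
Proof.
move=> [hT [K [K0 hK]]] [hS [L [L0 hL]]].
have h X : in_l2e X -> in_l2e (addE (T X) (S X)) /\
   norm2e (addE (T X) (S X)) <= norm2e (T X) + norm2e (S X).
  by move=> hX; apply: l2e_add; [apply: hT|apply: hS|by []|by []].
split; first by move=> X /h [].
exists (K + L); split; first exact: addr_ge0.
move=> X hX; have [_ n] := h X hX; apply: le_trans n _.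
by rewrite mulrDl; apply: lerD; [exact: hK | exact: hL].
Qed.

Lemma bnd_sub T S : bnd T -> bnd S -> bnd (fun X => subE (T X) (S X)).
Proof.
move=> [hT [K [K0 hK]]] [hS [L [L0 hL]]].
have h X : in_l2e X -> in_l2e (subE (T X) (S X)) /\
   norm2e (subE (T X) (S X)) <= norm2e (T X) + norm2e (S X).
  by move=> hX; apply: l2e_sub; [apply: hT|apply: hS|by []|by []].
split; first by move=> X /h [].
exists (K + L); split; first exact: addr_ge0.
move=> X hX; have [_ n] := h X hX; apply: le_trans n _.
by rewrite mulrDl; apply: lerD; [exact: hK | exact: hL].
Qed.

Lemma bnd_dom T (c : R) : 0 <= c ->
  (forall X n, (T X).1 n ^+ 2 + (T X).2 n ^+ 2 <= c * (X.1 n ^+ 2 + X.2 n ^+ 2)) ->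
  bnd T.
Proof.
move=> c0 h.
have H X : in_l2e X -> in_l2e (T X) /\ norm2e (T X) <= Num.sqrt c * norm2e X.
  by move=> hX; apply: l2e_dom.
split; first by move=> X /H [].
by exists (Num.sqrt c); split; [apply: sqrtr_ge0 | move=> X /H []].
Qed.

Lemma PiLe_sq (k : nat) U n : PiLe k U n ^+ 2 <= 1 * U n ^+ 2.
Proof. by rewrite mul1r /PiLe; case: ifP => // _; rewrite expr0n /= sqr_ge0. Qed.

Lemma PiGt_sq (k : nat) U n : PiGt k U n ^+ 2 <= 1 * U n ^+ 2.
Proof. by rewrite mul1r /PiGt; case: ifP => // _; rewrite expr0n /= sqr_ge0. Qed.

Lemma bnd_PiLe k : bnd (PiLeE k).
Proof.
apply: (@bnd_dom _ 1) => // X n /=; rewrite mulrDr lerD //; exact: PiLe_sq.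
Qed.

Lemma bnd_PiGt k : bnd (PiGtE k).
Proof.
apply: (@bnd_dom _ 1) => // X n /=; rewrite mulrDr lerD //; exact: PiGt_sq.
Qed.

Lemma scale_le W (a : R) : in_l2e W -> in_l2e (scaleE a W) /\ norm2e (scaleE a W) <= `|a| * norm2e W.
Proof.
move=> h.
have hd : forall n, (scaleE a W).1 n ^+ 2 + (scaleE a W).2 n ^+ 2 <=
   a ^+ 2 * (W.1 n ^+ 2 + W.2 n ^+ 2).
  by move=> n /=; rewrite !exprMn mulrDr.
have [h1 h2] := @l2e_dom R (scaleE a W) W (a ^+ 2) h (sqr_ge0 _) hd.
by rewrite sqrtr_sqr in h2.
Qed.

End Inf.


Section Ops.
Variable R : realType.
Implicit Types (U V Z : sq R) (W X Y : sq2 R).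

Lemma pair_ext X Y : (forall n, X.1 n = Y.1 n) -> (forall n, X.2 n = Y.2 n) -> X = Y.
Proof.
case: X => x1 x2; case: Y => y1 y2 /= h1 h2.
by congr pair; apply/funext.
Qed.

Lemma opnorm_bound (T : sq2 R -> sq2 R) W : bnd T ->
  (forall a X, T (scaleE a X) = scaleE a (T X)) -> in_l2e W ->
  norm2e (T W) <= opnorm T * norm2e W.
Proof.
move=> [hT [K [K0 hK]]] hs hW.
set S := [set norm2e (T X) | X in [set X | in_l2e X /\ norm2e X <= 1]].
have [h0l h0n] := scale_le 0 hW.
have h0 : S (norm2e (T (scaleE 0 W))).
  exists (scaleE 0 W) => //; split => //; apply: le_trans h0n _.
  by rewrite normr0 mul0r.
have hS : has_sup S.
  split; first by exists (norm2e (T (scaleE 0 W))).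
  exists K => y [X [hX hX1] <-]; apply: le_trans (hK X hX) _.
  by rewrite -[leRHS]mulr1 ler_wpM2l.
have op0 : 0 <= opnorm T.
  exact: le_trans (norm2e_ge0 _) (sup_upper_bound hS h0).
apply/ler_addgt0Pr => e e0.
set c := norm2e W + e / (opnorm T + 1).
have c0 : 0 < c.
  by rewrite /c ltr_pwDr ?norm2e_ge0 // divr_gt0 //; lra.
have [hy1 hy2] := scale_le c^-1 hW.
have hy : S (norm2e (T (scaleE c^-1 W))).
  exists (scaleE c^-1 W) => //; split => //; apply: le_trans hy2 _.
  rewrite gtr0_norm ?invr_gt0 // mulrC ler_pdivrMr // mul1r /c lerDl.
  by rewrite divr_ge0 //; lra.
have hTy := sup_upper_bound hS hy.
have eT : T W = scaleE c (T (scaleE c^-1 W)).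
  rewrite hs; apply: pair_ext => n /=; by rewrite mulrA divff ?mul1r // gt_eqF.
have [_ hn] := scale_le c (hT _ hy1).
rewrite eT; apply: (le_trans hn); rewrite gtr0_norm //.
apply: (@le_trans _ _ (c * opnorm T)).
  by rewrite ler_wpM2l // ltW.
rewrite /c mulrDl (mulrC (norm2e W)) lerD2l.
rewrite mulrAC ler_pdivrMr; last lra.
rewrite ler_wpM2l; lra.
Qed.

Lemma supq_facts d N (f : R -> R) G : (forall n : nat, `|f (tl d n)| <= G) ->
  0 <= supq d N f /\ forall n : nat, (2 * N < n)%N -> `|f (tl d n)| <= supq d N f.
Proof.
move=> hG.
set S := [set `|f (tl d n)| | n in [set n : nat | (2 * N < n)%N]].
have hS : has_sup S.
  split; first by exists (`|f (tl d (2 * N).+1)|); exists (2 * N).+1 => //=.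
  by exists G => y [n _ <-].
have h n : (2 * N < n)%N -> `|f (tl d n)| <= supq d N f.
  by move=> hn; apply: sup_upper_bound => //; exists n.
split => //; exact: (le_trans (normr_ge0 _) (h _ (ltnSn _))).
Qed.

Lemma num_aff (al be : R) (num : R -> R) :
  (forall xi, num xi = al * (2 * pi * xi) ^+ 2 + be) ->
  forall xi, `|num xi| <= (`|al| + `|be|) * (1 + (2 * pi * xi) ^+ 2).
Proof.
move=> h xi; rewrite h; set X := (2 * pi * xi) ^+ 2.
have X0 : 0 <= X by apply: sqr_ge0.
apply: le_trans (ler_normD _ _) _; rewrite normrM (ger0_norm X0).
have h1 : 0 <= `|al| by apply: normr_ge0.
have h2 : 0 <= `|be| * X by rewrite mulr_ge0.
have -> : (`|al| + `|be|) * (1 + X) = `|al| * X + `|be| + (`|al| + `|be| * X) by ring.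
lra.
Qed.

Definition supp V N := forall k, (N < k)%N -> V k = 0.

Lemma conv_lin V U U' (a b : R) N n : supp V N ->
  Defs.conv V (fun m => a * U m + b * U' m) n = a * Defs.conv V U n + b * Defs.conv V U' n.
Proof.
move=> hV; rewrite !(conv_fin _ _ hV) !mulrDr !mulr_sumr.
have -> : \sum_(i < N) V i.+1 * (a * U (distn n i.+1) + b * U' (distn n i.+1) +
    (a * U (n + i.+1)%N + b * U' (n + i.+1)%N)) =
  \sum_(i < N) a * (V i.+1 * (U (distn n i.+1) + U (n + i.+1)%N)) +
  \sum_(i < N) b * (V i.+1 * (U' (distn n i.+1) + U' (n + i.+1)%N)).
  by rewrite -big_split; apply: eq_bigr => i _ /=; ring.
ring.
Qed.

Lemma conv_ext V U U' n : (forall m, U m = U' m) -> Defs.conv V U n = Defs.conv V U' n.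
Proof. by move=> h; have -> : U = U' by apply/funext. Qed.

Lemma conv_hi V U N M n : supp V N -> (forall m, (M < m)%N -> U m = 0) ->
  (N + M < n)%N -> Defs.conv V U n = 0.
Proof.
move=> hV hU hn; rewrite (conv_fin _ _ hV) hU ?mulr0 ?add0r; last lia.
rewrite big1 // => i _; rewrite !hU ?addr0 ?mulr0 //; have := ltn_ord i; rewrite /distn; lia.
Qed.

Lemma conv_lo V U N n : supp V N -> (forall m, (m <= 2 * N)%N -> U m = 0) ->
  (n <= N)%N -> Defs.conv V U n = 0.
Proof.
move=> hV hU hn; rewrite (conv_fin _ _ hV) hU ?mulr0 ?add0r; last lia.
rewrite big1 // => i _; rewrite !hU ?addr0 ?mulr0 //; have := ltn_ord i; rewrite /distn; lia.
Qed.

Lemma DgN_bound V1 V2 N L : supp V1 N -> supp V2 N -> in_l2e L ->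
  in_l2e (DgN V1 V2 L) /\
  norm2e (DgN V1 V2 L) <= Num.sqrt 2 * (n1 V1 N * norm2 L.1 + n1 V2 N * norm2 L.2).
Proof.
move=> h1 h2 [hL1 hL2].
set S := n1 V1 N * norm2 L.1 + n1 V2 N * norm2 L.2.
have S0 : 0 <= S by rewrite addr_ge0 // mulr_ge0 ?n1_ge0 ?norm2_ge0.
apply: l2e_of_bound; first by rewrite mulr_ge0 ?sqrtr_ge0.
move=> M.
set s := fun n => Defs.conv V1 L.1 n + Defs.conv V2 L.2 n.
have e2 : ps2 (DgN V1 V2 L) M = 2 * ps s M.
  have e1 : ps (DgN V1 V2 L).1 M = ps s M by [].
  have e3 : ps (DgN V1 V2 L).2 M = ps s M.
    by apply: eq_bigr => i _; rewrite /= sqrrN.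
  rewrite /ps2 e1 e3; ring.
have y1 : Num.sqrt (ps (Defs.conv V1 L.1) M) <= n1 V1 N * norm2 L.1.
  apply: (le_trans (_ : _ <= Num.sqrt ((n1 V1 N * norm2 L.1) ^+ 2))).
    rewrite ler_sqrt ?sqr_ge0 //; apply: young_ps => //; first exact: norm2_ge0.
    by move=> M'; apply: ps_le_norm2.
  by rewrite sqrtr_sqr ger0_norm // mulr_ge0 ?n1_ge0 ?norm2_ge0.
have y2 : Num.sqrt (ps (Defs.conv V2 L.2) M) <= n1 V2 N * norm2 L.2.
  apply: (le_trans (_ : _ <= Num.sqrt ((n1 V2 N * norm2 L.2) ^+ 2))).
    rewrite ler_sqrt ?sqr_ge0 //; apply: young_ps => //; first exact: norm2_ge0.
    by move=> M'; apply: ps_le_norm2.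
  by rewrite sqrtr_sqr ger0_norm // mulr_ge0 ?n1_ge0 ?norm2_ge0.
have hs : ps s M <= S ^+ 2.
  apply: sq_le_of_sqrt; rewrite ?ps_ge0 //.
  apply: le_trans (ps_mink M (fun n => erefl (s n))) _.
  exact: lerD.
rewrite e2 exprMn sqr_sqrtr // ler_pM2l //.
Qed.

End Ops.


Section Proj.
Variable R : realType.
Implicit Types (X Y : sq2 R).
Lemma addE1 X Y n : (addE X Y).1 n = X.1 n + Y.1 n. Proof. by []. Qed.
Lemma addE2 X Y n : (addE X Y).2 n = X.2 n + Y.2 n. Proof. by []. Qed.
Lemma subE1 X Y n : (subE X Y).1 n = X.1 n - Y.1 n. Proof. by []. Qed.
Lemma subE2 X Y n : (subE X Y).2 n = X.2 n - Y.2 n. Proof. by []. Qed.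
Lemma scaleE1 a X n : (scaleE a X).1 n = a * X.1 n. Proof. by []. Qed.
Lemma scaleE2 a X n : (scaleE a X).2 n = a * X.2 n. Proof. by []. Qed.
Lemma negE1 X n : (negE X).1 n = - X.1 n. Proof. by []. Qed.
Lemma negE2 X n : (negE X).2 n = - X.2 n. Proof. by []. Qed.
Lemma PiLeE1 k X n : (PiLeE k X).1 n = if (n <= k)%N then X.1 n else 0. Proof. by []. Qed.
Lemma PiLeE2 k X n : (PiLeE k X).2 n = if (n <= k)%N then X.2 n else 0. Proof. by []. Qed.
Lemma PiGtE1 k X n : (PiGtE k X).1 n = if (k < n)%N then X.1 n else 0. Proof. by []. Qed.
Lemma PiGtE2 k X n : (PiGtE k X).2 n = if (k < n)%N then X.2 n else 0. Proof. by []. Qed.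
Lemma BopE N (BN : sq2 R -> sq2 R) Y : Bop N BN Y = addE (PiGtE N Y) (BN Y). Proof. by []. Qed.
End Proj.

Section Main.
Variable R : realType.
Variables (d nu nu1 nu2 nu3 : R) (N : nat) (V1 V2 : sq R) (BN : sq2 R -> sq2 R).
Hypothesis sV1 : supp V1 N.
Hypothesis sV2 : supp V2 N.
Hypothesis hlin : forall (a : R) (W W' : sq2 R),
  BN (addE (scaleE a W) W') = addE (scaleE a (BN W)) (BN W').
Hypothesis hBsupp : forall W : sq2 R, BN W = PiLeE N (BN (PiLeE N W)).

Local Notation z := ((fun _ => 0, fun _ => 0) : sq2 R).
Local Notation lt := (linv d nu nu1 nu2 nu3).
Local Notation D X := (DgN V1 V2 (linv d nu nu1 nu2 nu3 X)).

Lemma DgN1 L n : (DgN V1 V2 L).1 n = Defs.conv V1 L.1 n + Defs.conv V2 L.2 n.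
Proof. by []. Qed.
Lemma DgN2 L n : (DgN V1 V2 L).2 n = - (Defs.conv V1 L.1 n + Defs.conv V2 L.2 n).
Proof. by []. Qed.

Lemma BN0 : BN z = z.
Proof.
have := hlin (-1) z z.
have -> : addE (scaleE (-1) z) z = z by apply: pair_ext => n /=; rewrite mulr0 addr0.
move=> ->; apply: pair_ext => n /=; rewrite mulN1r addNr //.
Qed.

Lemma BNadd X Y : BN (addE X Y) = addE (BN X) (BN Y).
Proof.
have := hlin 1 X Y.
have -> : scaleE 1 X = X by apply: pair_ext => n /=; rewrite mul1r.
have -> : scaleE 1 (BN X) = BN X by apply: pair_ext => n /=; rewrite mul1r.
by [].
Qed.

Lemma BNscale a X : BN (scaleE a X) = scaleE a (BN X).
Proof.
have := hlin a X z; rewrite BN0.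
have -> : addE (scaleE a X) z = scaleE a X by apply: pair_ext => n /=; rewrite addr0.
move=> ->; apply: pair_ext => n /=; rewrite addr0 //.
Qed.

Lemma BNhi X n : (N < n)%N -> (BN X).1 n = 0 /\ (BN X).2 n = 0.
Proof. by move=> hn; rewrite (hBsupp X) /= /PiLe leqNgt hn. Qed.

Lemma BNlo X : (forall n, (n <= N)%N -> X.1 n = 0 /\ X.2 n = 0) -> BN X = z.
Proof.
move=> hX; rewrite (hBsupp X).
have -> : PiLeE N X = z.
  apply: pair_ext => n /=; rewrite /PiLe; case: ifP => // h; by case: (hX n h).
by rewrite BN0; apply: pair_ext => n /=; rewrite /PiLe; case: ifP.
Qed.

Lemma ltlin a b X Y :
  (lt (addE (scaleE a X) (scaleE b Y))).1 = (fun m => a * (lt X).1 m + b * (lt Y).1 m) /\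
  (lt (addE (scaleE a X) (scaleE b Y))).2 = (fun m => a * (lt X).2 m + b * (lt Y).2 m).
Proof. by split; apply/funext => m; rewrite /linv /=; ring. Qed.

Lemma Dlin a b X Y n :
  (D (addE (scaleE a X) (scaleE b Y))).1 n = a * (D X).1 n + b * (D Y).1 n /\
  (D (addE (scaleE a X) (scaleE b Y))).2 n = a * (D X).2 n + b * (D Y).2 n.
Proof.
have [e1 e2] := ltlin a b X Y.
have h : (D (addE (scaleE a X) (scaleE b Y))).1 n = a * (D X).1 n + b * (D Y).1 n.
  rewrite !DgN1 e1 e2 (@conv_lin R V1 _ _ a b N n sV1) (@conv_lin R V2 _ _ a b N n sV2).
  ring.
split => //; rewrite !DgN2 -!DgN1 h; ring.
Qed.

Lemma Dlo X n : (forall m, (m <= 2 * N)%N -> X.1 m = 0 /\ X.2 m = 0) ->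
    (n <= N)%N -> (D X).1 n = 0 /\ (D X).2 n = 0.
Proof.
move=> hX hn.
have h1 : (D X).1 n = 0.
  rewrite DgN1 (@conv_lo R V1 _ N n sV1) ?(@conv_lo R V2 _ N n sV2) ?addr0 //.
    by move=> m hm; rewrite /linv /=; case: (hX m hm) => -> ->; ring.
  by move=> m hm; rewrite /linv /=; case: (hX m hm) => -> ->; ring.
by split => //; rewrite DgN2 -DgN1 h1 oppr0.
Qed.

Lemma Dhi X n : (forall m, (2 * N < m)%N -> X.1 m = 0 /\ X.2 m = 0) ->
    (3 * N < n)%N -> (D X).1 n = 0 /\ (D X).2 n = 0.
Proof.
move=> hX hn.
have hn' : (N + 2 * N < n)%N by lia.
have h1 : (D X).1 n = 0.
  rewrite DgN1 (@conv_hi R V1 _ N (2 * N) n sV1) ?(@conv_hi R V2 _ N (2 * N) n sV2) ?addr0 //.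
    by move=> m hm; rewrite /linv /=; case: (hX m hm) => -> ->; ring.
  by move=> m hm; rewrite /linv /=; case: (hX m hm) => -> ->; ring.
by split => //; rewrite DgN2 -DgN1 h1 oppr0.
Qed.

Local Notation Aop X := (Bop N BN (addE X (D X))).

Lemma decomp W n :
  (subE W (Aop W)).1 n = (subE (PiLeE (2 * N) W) (PiLeE (3 * N) (Aop (PiLeE (2 * N) W)))).1 n
     + (negE (D (PiGtE (2 * N) W))).1 n /\
  (subE W (Aop W)).2 n = (subE (PiLeE (2 * N) W) (PiLeE (3 * N) (Aop (PiLeE (2 * N) W)))).2 n
     + (negE (D (PiGtE (2 * N) W))).2 n.
Proof.
set x1 := PiLeE (2 * N) W; set x2 := PiGtE (2 * N) W.
have eW : addE (scaleE 1 x1) (scaleE 1 x2) = W.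
  apply: pair_ext => m; rewrite ?addE1 ?addE2 ?scaleE1 ?scaleE2 !mul1r /x1 /x2
    ?PiLeE1 ?PiLeE2 ?PiGtE1 ?PiGtE2; case: leqP => _; rewrite ?addr0 ?add0r //.
have hD m : (D W).1 m = (D x1).1 m + (D x2).1 m /\ (D W).2 m = (D x1).2 m + (D x2).2 m.
  by have := Dlin 1 1 x1 x2 m; rewrite eW !mul1r.
set Y1 := addE x1 (D x1); set Y2 := addE x2 (D x2).
have eY : addE W (D W) = addE Y1 Y2.
  apply: pair_ext => m; case: (hD m) => e1 e2; rewrite ?addE1 ?addE2 ?e1 ?e2;
  rewrite -[in LHS]eW ?addE1 ?addE2 ?scaleE1 ?scaleE2 !mul1r; ring.
have x2lo : forall m, (m <= 2 * N)%N -> x2.1 m = 0 /\ x2.2 m = 0.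
  by move=> m hm; rewrite /x2 PiGtE1 PiGtE2 ltnNge hm.
have x1hi : forall m, (2 * N < m)%N -> x1.1 m = 0 /\ x1.2 m = 0.
  by move=> m hm; rewrite /x1 PiLeE1 PiLeE2 leqNgt hm.
have BY2 : BN Y2 = z.
  apply: BNlo => m hm; rewrite /Y2 addE1 addE2.
  have [a1 a2] := x2lo m (leq_trans hm (leq_pmull _ (isT : (0 < 2)%N))).
  have [b1 b2] := Dlo x2lo hm.
  by rewrite a1 a2 b1 b2 addr0.
have hd2 : (n <= N)%N -> (D x2).1 n = 0 /\ (D x2).2 n = 0 by apply: Dlo.
have hd1 : (3 * N < n)%N -> (D x1).1 n = 0 /\ (D x1).2 n = 0 by apply: Dhi.
have hb : (N < n)%N -> (BN Y1).1 n = 0 /\ (BN Y1).2 n = 0 by apply: BNhi.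
have [bz1 bz2] : (BN Y2).1 n = 0 /\ (BN Y2).2 n = 0 by rewrite BY2.
rewrite [Bop N BN (addE W _)]BopE eY BNadd [Bop N BN _]BopE.
rewrite !subE1 !subE2 !negE1 !negE2 !addE1 !addE2 !PiGtE1 !PiGtE2 !PiLeE1 !PiLeE2.
rewrite /Y1 /Y2 !addE1 !addE2 /x1 /x2 !PiGtE1 !PiGtE2 !PiLeE1 !PiLeE2.
rewrite -/x1 -/x2 ?addE1 ?addE2 bz1 bz2.
have ex1 : x1.1 n = if (n <= 2 * N)%N then W.1 n else 0 by [].
have ex2 : x1.2 n = if (n <= 2 * N)%N then W.2 n else 0 by [].
rewrite ex1 ex2 -/Y1.
case: (leqP n N) => h1; case: (leqP n (2 * N)) => h2; case: (leqP n (3 * N)) => h3;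
  try (exfalso; lia).
- by case: (hd2 h1) => -> ->; split; ring.
- by case: (hb h1) => -> ->; split; ring.
- by case: (hb h1) => -> ->; split; ring.
- by case: (hb h1) => -> ->; case: (hd1 h3) => -> ->; split; ring.
Qed.


Lemma Dscale a (Y : sq2 R) n : (D (scaleE a Y)).1 n = a * (D Y).1 n /\ (D (scaleE a Y)).2 n = a * (D Y).2 n.
Proof.
have e : addE (scaleE a Y) (scaleE 0 Y) = scaleE a Y.
  by apply: pair_ext => m; rewrite ?addE1 ?addE2 ?scaleE1 ?scaleE2 mul0r addr0.
have := Dlin a 0 Y Y n; rewrite e !mul0r !addr0 //.
Qed.

Lemma PiLeE_scale k a (X : sq2 R) : PiLeE k (scaleE a X) = scaleE a (PiLeE k X).
Proof.
by apply: pair_ext => m; rewrite ?PiLeE1 ?PiLeE2 ?scaleE1 ?scaleE2 ?PiLeE1 ?PiLeE2; case: ifP; rewrite ?mulr0.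
Qed.

Lemma PiGtE_scale k a (X : sq2 R) : PiGtE k (scaleE a X) = scaleE a (PiGtE k X).
Proof.
by apply: pair_ext => m; rewrite ?PiGtE1 ?PiGtE2 ?scaleE1 ?scaleE2 ?PiGtE1 ?PiGtE2; case: ifP; rewrite ?mulr0.
Qed.

Lemma Aop_scale a (Y : sq2 R) : Aop (scaleE a Y) = scaleE a (Aop Y).
Proof.
have eF : addE (scaleE a Y) (D (scaleE a Y)) = scaleE a (addE Y (D Y)).
  apply: pair_ext => m; case: (Dscale a Y m) => e1 e2;
  rewrite ?addE1 ?addE2 ?scaleE1 ?scaleE2 ?e1 ?e2 ?addE1 ?addE2; ring.
rewrite !BopE eF BNscale PiGtE_scale.
by apply: pair_ext => m; rewrite ?addE1 ?addE2 ?scaleE1 ?scaleE2 ?addE1 ?addE2; ring.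
Qed.

Local Notation T1 := (fun X : sq2 R => subE (PiLeE (2 * N) X) (PiLeE (3 * N) (Aop (PiLeE (2 * N) X)))).

Lemma T1_scale a (X : sq2 R) : T1 (scaleE a X) = scaleE a (T1 X).
Proof.
rewrite /= PiLeE_scale Aop_scale PiLeE_scale.
by apply: pair_ext => m; rewrite ?subE1 ?subE2 ?scaleE1 ?scaleE2 ?subE1 ?subE2; ring.
Qed.

Variable C G : R.
Hypothesis hBl2 : forall W : sq2 R, in_l2e W -> in_l2e (BN W).
Hypothesis hC : forall W : sq2 R, in_l2e W -> norm2e (BN W) <= C * norm2e W.
Hypothesis hG0 : 0 <= G.
Hypothesis hG : forall n : nat,
  [/\ `|l22 nu2 (tl d n) / lden nu nu1 nu2 nu3 (tl d n)| <= G,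
      `|l12 nu2 (tl d n) / lden nu nu1 nu2 nu3 (tl d n)| <= G,
      `|l21 nu3 (tl d n) / lden nu nu1 nu2 nu3 (tl d n)| <= G &
      `|l11 nu nu1 (tl d n) / lden nu nu1 nu2 nu3 (tl d n)| <= G].

Lemma bnd_BN : bnd BN.
Proof.
split => //; exists `|C|; split => // X hX.
apply: (le_trans (hC hX)); apply: ler_wpM2r; [exact: norm2e_ge0 | exact: ler_norm].
Qed.

Lemma sq_mul_le (r x : R) : `|r| <= G -> (r * x) ^+ 2 <= G ^+ 2 * x ^+ 2.
Proof.
move=> h; rewrite exprMn ler_wpM2r ?sqr_ge0 //.
rewrite -real_normK ?num_real // ler_pXn2r ?nnegrE //; exact: normr_ge0.
Qed.

Lemma bnd_lt : bnd lt.
Proof.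
apply: (@bnd_dom _ _ (4 * G ^+ 2)); first by rewrite mulr_ge0 ?sqr_ge0.
move=> X n; case: (hG n) => g22 g12 g21 g11.
set L := lden nu nu1 nu2 nu3 (tl d n).
have e1 : (lt X).1 n = l22 nu2 (tl d n) / L * X.1 n - l12 nu2 (tl d n) / L * X.2 n.
  by rewrite /linv /= -/L; ring.
have e2 : (lt X).2 n = - (l21 nu3 (tl d n) / L * X.1 n) + l11 nu nu1 (tl d n) / L * X.2 n.
  by rewrite /linv /= -/L; ring.
rewrite e1 e2.
set u1 := l22 nu2 (tl d n) / L * X.1 n; set v1 := l12 nu2 (tl d n) / L * X.2 n.
set u2 := l21 nu3 (tl d n) / L * X.1 n; set v2 := l11 nu nu1 (tl d n) / L * X.2 n.
have hu1 := sq_mul_le (X.1 n) g22; have hv1 := sq_mul_le (X.2 n) g12.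
have hu2 := sq_mul_le (X.1 n) g21; have hv2 := sq_mul_le (X.2 n) g11.
rewrite -/u1 -/v1 -/u2 -/v2 in hu1 hv1 hu2 hv2.
have q1 : (u1 - v1) ^+ 2 <= 2 * u1 ^+ 2 + 2 * v1 ^+ 2.
  by rewrite -subr_ge0 (_ : _ - _ = (u1 + v1) ^+ 2) ?sqr_ge0 //; ring.
have q2 : (- u2 + v2) ^+ 2 <= 2 * u2 ^+ 2 + 2 * v2 ^+ 2.
  by rewrite -subr_ge0 (_ : _ - _ = (u2 + v2) ^+ 2) ?sqr_ge0 //; ring.
have -> : 4 * G ^+ 2 * (X.1 n ^+ 2 + X.2 n ^+ 2) =
  4 * (G ^+ 2 * X.1 n ^+ 2) + 4 * (G ^+ 2 * X.2 n ^+ 2) by ring.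
lra.
Qed.

Lemma bnd_Dg : bnd (DgN V1 V2).
Proof.
have H X : in_l2e X -> in_l2e (DgN V1 V2 X) /\
  norm2e (DgN V1 V2 X) <= Num.sqrt 2 * (n1 V1 N * norm2 X.1 + n1 V2 N * norm2 X.2).
  by move=> hX; apply: DgN_bound.
split; first by move=> X /H [].
exists (Num.sqrt 2 * (n1 V1 N + n1 V2 N)); split.
  by apply: mulr_ge0; [exact: sqrtr_ge0 | exact: addr_ge0 (n1_ge0 _ _) (n1_ge0 _ _)].
move=> X hX; have [_ h] := H X hX; apply: (le_trans h).
rewrite -mulrA ler_wpM2l ?sqrtr_ge0 //.
have [a1 a2] := norm2_le_e X.
apply: (@le_trans _ _ (n1 V1 N * norm2e X + n1 V2 N * norm2e X)); last by rewrite -mulrDl.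
by apply: lerD; apply: ler_wpM2l; rewrite ?n1_ge0.
Qed.

Lemma bnd_id : bnd (fun X : sq2 R => X).
Proof. by apply: (@bnd_dom _ _ 1) => // X n; rewrite mul1r. Qed.

Lemma bnd_T1 : bnd T1.
Proof.
have bF : bnd (fun Y : sq2 R => addE Y (DgN V1 V2 (lt Y))).
  exact: (@bnd_add R (fun Y => Y) (fun Y => DgN V1 V2 (lt Y)) bnd_id (bnd_comp bnd_Dg bnd_lt)).
have bA : bnd (fun Y : sq2 R => addE (PiGtE N (addE Y (DgN V1 V2 (lt Y))))
     (BN (addE Y (DgN V1 V2 (lt Y))))).
  have b1 := bnd_comp (@bnd_PiGt R N) bF.
  have b2 := bnd_comp bnd_BN bF.
  have b3 := bnd_add b1 b2.
  exact: b3.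
exact: (bnd_sub (@bnd_PiLe R (2 * N)) (bnd_comp (@bnd_PiLe R (3 * N)) (bnd_comp bA (@bnd_PiLe R (2 * N))))).
Qed.

End Main.

Section Fin.
Variable R : realType.

Lemma cs3 (u1 u2 u3 v1 v2 v3 : R) :
  u1 * v1 + u2 * v2 + u3 * v3 <=
  Num.sqrt (u1 ^+ 2 + u2 ^+ 2 + u3 ^+ 2) * Num.sqrt (v1 ^+ 2 + v2 ^+ 2 + v3 ^+ 2).
Proof.
apply: (le_trans (ler_norm _)); apply: abs_le_of_sq.
  by rewrite mulr_ge0 ?sqrtr_ge0.
rewrite exprMn !sqr_sqrtr ?addr_ge0 ?sqr_ge0 // -subr_ge0.
have -> : (u1 ^+ 2 + u2 ^+ 2 + u3 ^+ 2) * (v1 ^+ 2 + v2 ^+ 2 + v3 ^+ 2) -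
    (u1 * v1 + u2 * v2 + u3 * v3) ^+ 2 =
  (u1 * v2 - u2 * v1) ^+ 2 + (u1 * v3 - u3 * v1) ^+ 2 + (u2 * v3 - u3 * v2) ^+ 2 by ring.
by rewrite !addr_ge0 ?sqr_ge0.
Qed.

End Fin.

Unset Implicit Arguments.

Theorem lemma4p5 (R : realType) (d nu nu1 nu2 nu3 nu4 nu5 : R)
  (N0 N : nat) (Ub : sq2 R) (BN : sq2 R -> sq2 R) :
  1 <= d -> 0 < nu ->
  (forall xi : R, lden nu nu1 nu2 nu3 xi != 0) ->
  Ub = PiLeE N0 Ub ->
  (forall (a : R) (W W' : sq2 R), BN (addE (scaleE a W) W') = addE (scaleE a (BN W)) (BN W')) ->
  (forall W : sq2 R, in_l2e W -> in_l2e (BN W)) ->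
  (exists C : R, forall W : sq2 R, in_l2e W -> norm2e (BN W) <= C * norm2e W) ->
  (forall W : sq2 R, BN W = PiLeE N (BN (PiLeE N W))) ->
  let V1 := V1N d nu4 nu5 N Ub in
  let V2 := V2N d nu5 N Ub in
  let A := fun W : sq2 R =>
             Bop N BN (addE W (DgN V1 V2 (linv d nu nu1 nu2 nu3 W))) in
  let Z0 := opnorm (fun W : sq2 R =>
             subE (PiLeE (2 * N) W) (PiLeE (3 * N) (A (PiLeE (2 * N) W)))) in
  let q := fun f : R -> R => supq d N f in
  let Z11 := q (fun xi => l22 nu2 xi / lden nu nu1 nu2 nu3 xi) * norm1 V1
           + q (fun xi => l21 nu3 xi / lden nu nu1 nu2 nu3 xi) * norm1 V2 in
  let Z12 := q (fun xi => l12 nu2 xi / lden nu nu1 nu2 nu3 xi) * norm1 V1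
           + q (fun xi => l11 nu nu1 xi / lden nu nu1 nu2 nu3 xi) * norm1 V2 in
  let Z1 := Num.sqrt (Z0 ^+ 2 + 2 * Z11 ^+ 2 + 2 * Z12 ^+ 2) in
  forall W : sq2 R, in_l2e W -> norm2e (subE W (A W)) <= Z1 * norm2e W.
Proof.
move=> hd hnu hden hUb hlin hBl2 [C hC] hBsupp V1 V2 A Z0 q Z11 Z12 Z1 W hW.
have d0 : 0 < d by lra.
have sV1 : supp V1 N by move=> k hk; rewrite /V1 /V1N /PiLe leqNgt hk.
have sV2 : supp V2 N by move=> k hk; rewrite /V2 /V2N /PiLe leqNgt hk.
have [G22 hG22] : exists G, forall n : nat,
    `|l22 nu2 (tl d n) / lden nu nu1 nu2 nu3 (tl d n)| <= G.
  apply: (@ratio_bound R d nu nu1 nu2 nu3 (`|-1| + `|- nu2|) _ d0 hnu (addr_ge0 (normr_ge0 _) (normr_ge0 _)) hden).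
  by apply: num_aff => xi; rewrite /l22; ring.
have [G12 hG12] : exists G, forall n : nat,
    `|l12 nu2 (tl d n) / lden nu nu1 nu2 nu3 (tl d n)| <= G.
  apply: (@ratio_bound R d nu nu1 nu2 nu3 (`|0| + `|nu2|) _ d0 hnu (addr_ge0 (normr_ge0 _) (normr_ge0 _)) hden).
  by apply: num_aff => xi; rewrite /l12; ring.
have [G21 hG21] : exists G, forall n : nat,
    `|l21 nu3 (tl d n) / lden nu nu1 nu2 nu3 (tl d n)| <= G.
  apply: (@ratio_bound R d nu nu1 nu2 nu3 (`|0| + `|nu3|) _ d0 hnu (addr_ge0 (normr_ge0 _) (normr_ge0 _)) hden).
  by apply: num_aff => xi; rewrite /l21; ring.
have [G11 hG11] : exists G, forall n : nat,
    `|l11 nu nu1 (tl d n) / lden nu nu1 nu2 nu3 (tl d n)| <= G.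
  apply: (@ratio_bound R d nu nu1 nu2 nu3 (`|- nu| + `|nu1|) _ d0 hnu (addr_ge0 (normr_ge0 _) (normr_ge0 _)) hden).
  by apply: num_aff => xi; rewrite /l11; ring.
set G := `|G22| + `|G12| + `|G21| + `|G11|.
have hG0 : 0 <= G by rewrite !addr_ge0.
have hG : forall n : nat,
  [/\ `|l22 nu2 (tl d n) / lden nu nu1 nu2 nu3 (tl d n)| <= G,
      `|l12 nu2 (tl d n) / lden nu nu1 nu2 nu3 (tl d n)| <= G,
      `|l21 nu3 (tl d n) / lden nu nu1 nu2 nu3 (tl d n)| <= G &
      `|l11 nu nu1 (tl d n) / lden nu nu1 nu2 nu3 (tl d n)| <= G].
  move=> n.
  have a1 := ler_norm G22; have a2 := ler_norm G12.
  have a3 := ler_norm G21; have a4 := ler_norm G11.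
  have b1 := normr_ge0 G22; have b2 := normr_ge0 G12.
  have b3 := normr_ge0 G21; have b4 := normr_ge0 G11.
  have := hG22 n; have := hG12 n; have := hG21 n; have := hG11 n.
  rewrite /G; split; lra.
pose T1 := fun X : sq2 R => subE (PiLeE (2 * N) X) (PiLeE (3 * N) (A (PiLeE (2 * N) X))).
have bT1 : bnd T1 := bnd_T1 sV1 sV2 hBl2 hC hG0 hG.
have sT1 : forall a X, T1 (scaleE a X) = scaleE a (T1 X) := T1_scale d nu nu1 nu2 nu3 sV1 sV2 hlin.
set x1 := PiLeE (2 * N) W; set x2 := PiGtE (2 * N) W.
have [hP1 _] := @bnd_PiLe R (2 * N); have hx1 : in_l2e x1 := hP1 W hW.
have [hP2 _] := @bnd_PiGt R (2 * N); have hx2 : in_l2e x2 := hP2 W hW.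
have ex : PiLeE (2 * N) x1 = x1.
  by apply: pair_ext => n; rewrite /x1 ?PiLeE1 ?PiLeE2; case: leqP.
have eT : T1 x1 = T1 W := congr1 (fun Y => subE Y (PiLeE (3 * N) (A Y))) ex.
have nT : norm2e (T1 W) <= Z0 * norm2e x1.
  by rewrite -eT; exact: (opnorm_bound bT1 sT1 hx1).
have [hT1 _] := bT1; have iT : in_l2e (T1 W) := hT1 W hW.
set al := norm2 x2.1; set be := norm2 x2.2.
have hx2lo : forall n, (n <= 2 * N)%N -> x2.1 n = 0 /\ x2.2 n = 0.
  by move=> n hn; rewrite /x2 PiGtE1 PiGtE2 ltnNge hn.
have [hx21 hx22] := hx2.
have mulb : forall (r : nat -> R) (Q : R) (u : sq R), 0 <= Q -> in_l2 u ->
    (forall n, (n <= 2 * N)%N -> u n = 0) -> (forall n, (2 * N < n)%N -> `|r n| <= Q) ->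
    in_l2 (fun n => r n * u n) /\ norm2 (fun n => r n * u n) <= Q * norm2 u.
  move=> r Q u Q0 hu hz hr.
  have hd2 : forall n, (r n * u n) ^+ 2 <= Q ^+ 2 * u n ^+ 2.
    move=> n; case: (leqP n (2 * N)) => hn.
      by rewrite hz // mulr0 expr0n /= mulr0.
    by apply: (@sq_mul_le R Q Q0 (r n) (u n) (hr n hn)).
  have [h1 h2] := @l2_dom R (fun n => r n * u n) u (Q ^+ 2) hu (sqr_ge0 _) hd2.
  by split => //; rewrite sqrtr_sqr ger0_norm in h2.
pose r22 := fun n : nat => l22 nu2 (tl d n) / lden nu nu1 nu2 nu3 (tl d n).
pose r12 := fun n : nat => l12 nu2 (tl d n) / lden nu nu1 nu2 nu3 (tl d n).
pose r21 := fun n : nat => l21 nu3 (tl d n) / lden nu nu1 nu2 nu3 (tl d n).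
pose r11 := fun n : nat => l11 nu nu1 (tl d n) / lden nu nu1 nu2 nu3 (tl d n).
have [q22p q22b] := @supq_facts R d N (fun xi => l22 nu2 xi / lden nu nu1 nu2 nu3 xi) G22 hG22.
have [q12p q12b] := @supq_facts R d N (fun xi => l12 nu2 xi / lden nu nu1 nu2 nu3 xi) G12 hG12.
have [q21p q21b] := @supq_facts R d N (fun xi => l21 nu3 xi / lden nu nu1 nu2 nu3 xi) G21 hG21.
have [q11p q11b] := @supq_facts R d N (fun xi => l11 nu nu1 xi / lden nu nu1 nu2 nu3 xi) G11 hG11.
have z1 : forall n, (n <= 2 * N)%N -> x2.1 n = 0 by move=> n hn; case: (hx2lo n hn).
have z2 : forall n, (n <= 2 * N)%N -> x2.2 n = 0 by move=> n hn; case: (hx2lo n hn).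
have [iU1 nU1] := mulb r22 _ x2.1 q22p hx21 z1 q22b.
have [iV1 nV1] := mulb r12 _ x2.2 q12p hx22 z2 q12b.
have [iU2 nU2] := mulb r11 _ x2.2 q11p hx22 z2 q11b.
have [iV2 nV2] := mulb r21 _ x2.1 q21p hx21 z1 q21b.
set L := linv d nu nu1 nu2 nu3 x2.
have eL1 : forall n, L.1 n = r22 n * x2.1 n - r12 n * x2.2 n.
  by move=> n; rewrite /L /linv /r22 /r12 /=; ring.
have eL2 : forall n, L.2 n = r11 n * x2.2 n - r21 n * x2.1 n.
  by move=> n; rewrite /L /linv /r11 /r21 /=; ring.
have [iL1 nL1] := l2_sub iU1 iV1 eL1.
have [iL2 nL2] := l2_sub iU2 iV2 eL2.
have iL : in_l2e L by split.
have [iD nD] := DgN_bound sV1 sV2 iL.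
have [iNeg nNeg] := in_l2e_neg iD.
have nm1 := n1_ge0 V1 N; have nm2 := n1_ge0 V2 N.
have nT2 : norm2e (negE (DgN V1 V2 L)) <= Num.sqrt 2 * (Z11 * al + Z12 * be).
  apply: (le_trans nNeg); apply: (le_trans nD); rewrite ler_wpM2l ?sqrtr_ge0 //.
  have l1 : norm2 L.1 <= q (fun xi => l22 nu2 xi / lden nu nu1 nu2 nu3 xi) * al +
                          q (fun xi => l12 nu2 xi / lden nu nu1 nu2 nu3 xi) * be.
    by apply: (le_trans nL1); apply: lerD.
  have l2 : norm2 L.2 <= q (fun xi => l11 nu nu1 xi / lden nu nu1 nu2 nu3 xi) * be +
                          q (fun xi => l21 nu3 xi / lden nu nu1 nu2 nu3 xi) * al.
    by apply: (le_trans nL2); apply: lerD.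
  apply: (le_trans (lerD (ler_wpM2l nm1 l1) (ler_wpM2l nm2 l2))).
  rewrite /Z11 /Z12 (norm1_fin sV1) (norm1_fin sV2).
  by rewrite le_eqVlt; apply/orP; left; apply/eqP; ring.
have eps : ps2 x1 + ps2 x2 = ps2 W.
  apply/funext => M.
  have -> : (ps2 x1 + ps2 x2) M = ps2 x1 M + ps2 x2 M by [].
  rewrite /ps2 /ps -!big_split; apply: eq_bigr => i _ /=.
  rewrite /PiLe /PiGt; case: leqP => _; rewrite ?expr0n /= ?mulr0 ?addr0 ?add0r //.
have c12 := cvgD (ps2_cvg hx1) (ps2_cvg hx2).
rewrite eps in c12.
have orth : norm2e W ^+ 2 = norm2e x1 ^+ 2 + (al ^+ 2 + be ^+ 2).
  rewrite -norm2e_sqE.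
  have l1 : limn (ps2 W) = norm2e x1 ^+ 2 + norm2e x2 ^+ 2 by apply: cvg_lim => //; exact: c12.
  have l2 : limn (ps2 W) = norm2e W ^+ 2 by apply: cvg_lim => //; apply: ps2_cvg.
  by rewrite -l2 l1.
have B0 : 0 <= Z1 * norm2e W by rewrite mulr_ge0 ?sqrtr_ge0 ?norm2e_ge0.
have hps : forall M, ps2 (subE W (A W)) M <= (Z1 * norm2e W) ^+ 2.
  move=> M; apply: sq_le_of_sqrt; rewrite ?ps2_ge0 //.
  have dc := decomp d nu nu1 nu2 nu3 sV1 sV2 hlin hBsupp W.
  have m := ps2_mink M (fun n => proj1 (dc n)) (fun n => proj2 (dc n)).
  apply: (le_trans m).
  apply: (le_trans (lerD (sqrt_ps2_le M iT) (sqrt_ps2_le M iNeg))).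
  apply: (le_trans (lerD nT nT2)).
  have s2 : Num.sqrt 2 ^+ 2 = 2 :> R by rewrite sqr_sqrtr.
  have eW : norm2e W = Num.sqrt (norm2e x1 ^+ 2 + al ^+ 2 + be ^+ 2).
    by rewrite -addrA -orth sqrtr_sqr ger0_norm ?norm2e_ge0.
  have eZ : Z1 = Num.sqrt (Z0 ^+ 2 + (Num.sqrt 2 * Z11) ^+ 2 + (Num.sqrt 2 * Z12) ^+ 2).
    by rewrite !exprMn s2.
  rewrite eW eZ.
  apply: le_trans (cs3 Z0 (Num.sqrt 2 * Z11) (Num.sqrt 2 * Z12) (norm2e x1) al be).
  by rewrite le_eqVlt; apply/orP; left; apply/eqP; ring.
have [_ h] := l2e_of_bound B0 hps.
exact: h.
Qed.
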